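(* Let $\Gamma$ be a finitely generated abelian group, $\mathcal{A}=\{\alpha_1,\dots,\alpha_n\}\subset\Gamma$ a finite list, $G$ a torsion-wise finite abelian group, and fix $\alpha_i\in\mathcal{A}$. Let $\mathcal{A}'=\mathcal{A}\smallsetminus\{\alpha_i\}\subset\Gamma$ and $\mathcal{A}''=\{\overline{\alpha_j}\mid j\ne i\}\subset\Gamma/\langle\alpha_i\rangle$, both lists indexed by $[n]\smallsetminus\{i\}$ so that the variables $v_j$ ($j\neq i$) are attached to the same index. Then $$Z^G_{\mathcal{A}}(q,\boldsymbol v)=\begin{cases}Z^G_{\mathcal{A}'}(q,\boldsymbol v)+v_i\,Z^G_{\mathcal{A}''}(q,\boldsymbol v),&\text{if }\alpha_i\text{ is a loop},\\ Z^G_{\mathcal{A}'}(q,\boldsymbol v)+v_i\,q^{-1}\,Z^G_{\mathcal{A}''}(q,\boldsymbol v),&\text{otherwise.}\end{cases}$$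
   Context: An abelian group $G$ is torsion-wise finite if $G[d]=\{x\in G\mid dx=0\}$ is finite for every $d>0$. Lists are multisets with sublists distinguished by index. For a sublist $\mathcal{S}$ of a list in a finitely generated abelian group $\Gamma$, $r_{\mathcal{S}}$ is the rank of $\langle\mathcal{S}\rangle$ and the $G$-multiplicity is $m(\mathcal{S};G)=\#\mathrm{Hom}((\Gamma/\langle\mathcal{S}\rangle)_{\mathrm{tor}},G)$ (the subscript tor denotes the torsion subgroup). The multivariate $G$-Tutte polynomial is $Z^G_{\mathcal{A}}(q,v_1,\dots,v_n)=\sum_{\mathcal{S}\subset\mathcal{A}}m(\mathcal{S};G)\,q^{-r_{\mathcal{S}}}\prod_{\alpha_i\in\mathcal{S}}v_i$ (for $\mathcal{A}''$ the multiplicities and ranks are computed in $\Gamma/\langle\alpha_i\rangle$). An element $\alpha\in\mathcal{A}$ is a loop if $\alpha\in\Gamma_{\mathrm{tor}}$. *)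

(* Defs.v *)
From HB Require Import structures.
From mathcomp Require Import all_boot all_order all_algebra.
From Stdlib Require Import ClassicalEpsilon.
From Stdlib Require List.
Set Implicit Arguments. Unset Strict Implicit. Unset Printing Implicit Defensive.
Import Order.TTheory GRing.Theory Num.Theory.
Local Open Scope ring_scope.

Definition span (Gam : zmodType) (X : seq Gam) (x : Gam) : Prop :=
  exists c : nat -> int, x = \sum_(k < size X) X`_k *~ c k.

Definition fin_gen (Gam : zmodType) : Prop :=
  exists gens : seq Gam, forall x, span gens x.

Definition torsionwise_finite (G : zmodType) : Prop :=
  forall d : nat, (0 < d)%N ->
    exists l : list G, forall x : G, x *+ d = 0 -> List.In x l.

Definition is_loop (Gam : zmodType) (a : Gam) : Prop :=
  exists d : nat, (0 < d)%N /\ a *+ d = 0.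

(* preimage in Gamma of the torsion subgroup of Gamma/<X> *)
Definition tor_mod (Gam : zmodType) (X : seq Gam) (x : Gam) : Prop :=
  exists d : nat, (0 < d)%N /\ span X (x *+ d).

(* Homomorphisms (Gamma/<X>)_tor -> G, represented (bijectively) as maps
   Gamma -> G additive on tor_mod X, vanishing on <X>, and zero outside
   tor_mod X (normalisation making the representative unique). *)
Definition tor_hom (Gam G : zmodType) (X : seq Gam) (f : Gam -> G) : Prop :=
  [/\ (forall x y, tor_mod X x -> tor_mod X y -> f (x + y) = f x + f y),
      (forall x, span X x -> f x = 0) &
      (forall x, ~ tor_mod X x -> f x = 0)].

Definition card_is (T : Type) (P : T -> Prop) (n : nat) : Prop :=
  exists l : list T, List.NoDup l /\ length l = n /\
    forall x, P x <-> List.In x l.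

(* the number of elements (0 if infinite; only used when finite) *)
Definition ncard (T : Type) (P : T -> Prop) : nat :=
  epsilon (inhabits 0%N) (card_is P).

Definition mult (Gam : zmodType) (G : zmodType) (X : seq Gam) : nat :=
  ncard (@tor_hom Gam G X).

Definition indep_mod (Gam : zmodType) (B l : seq Gam) : Prop :=
  forall c : nat -> int, span B (\sum_(k < size l) l`_k *~ c k) ->
    forall k, (k < size l)%N -> c k = 0.

Definition rank_is (Gam : zmodType) (B S : seq Gam) (r : nat) : Prop :=
  (exists l : seq Gam, size l = r /\ (forall k, (k < size l)%N -> span S l`_k)
                       /\ indep_mod B l) /\
  (forall l : seq Gam, (forall k, (k < size l)%N -> span S l`_k) ->
                       indep_mod B l -> (size l <= r)%N).

Definition rank_mod (Gam : zmodType) (B S : seq Gam) : nat :=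
  epsilon (inhabits 0%N) (rank_is B S).

(* Multivariate G-Tutte polynomial (evaluated) of the list (A j)_{j in D},
   viewed in Gamma/<B>: B = [::] gives the list in Gamma itself, and
   B = [:: A i] gives the list of images in Gamma/<A i>.  Multiplicities
   of a sublist S are #Hom(((Gamma/<B>)/<S>)_tor, G) = #Hom((Gamma/<B ++ S>)_tor, G). *)
Definition Ztutte (R : comUnitRingType) (Gam G : zmodType) (n : nat)
    (B : seq Gam) (D : {set 'I_n}) (A : 'I_n -> Gam) (q : R) (v : 'I_n -> R) : R :=
  \sum_(S : {set 'I_n} | S \subset D)
     ((mult G (B ++ [seq A j | j in S]))%:R
        * (q^-1) ^+ (rank_mod B [seq A j | j in S])
        * \prod_(j in S) v j).

(* Main.v *)
Require Import Defs.
From HB Require Import structures.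
From mathcomp Require Import all_boot all_order all_algebra.
From Stdlib Require Import ClassicalEpsilon Classical FunctionalExtensionality PropExtensionality.
From mathcomp Require Import ring zify.
Set Implicit Arguments. Unset Strict Implicit. Unset Printing Implicit Defensive.
Import GRing.Theory Num.Theory.
Local Open Scope ring_scope.
Local Notation span := Defs.span.

Section Span.
Variable Gam : zmodType.
Implicit Types X Y : seq Gam.

Lemma span0 X : span X 0.
Proof. exists (fun _ => 0); by rewrite big1 // => k _; rewrite mulr0z. Qed.

Lemma spanD X x y : span X x -> span X y -> span X (x + y).
Proof.
move=> [c1 ->] [c2 ->]; exists (fun k => c1 k + c2 k).
by rewrite -big_split /=; apply: eq_bigr => k _; rewrite mulrzDr.
Qed.

Lemma spanZ X x z : span X x -> span X (x *~ z).
Proof.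
move=> [c ->]; exists (fun k => c k * z).
by rewrite mulrz_suml; apply: eq_bigr => k _; rewrite mulrzA.
Qed.

Lemma spanN X x : span X x -> span X (- x).
Proof. by move=> h; rewrite -mulrN1z; apply: spanZ. Qed.

Lemma spanB X x y : span X x -> span X y -> span X (x - y).
Proof. by move=> hx hy; apply: spanD => //; apply: spanN. Qed.

Lemma span_nth X k : (k < size X)%N -> span X X`_k.
Proof.
move=> hk; exists (fun j => (j == k)%:Z).
rewrite (bigD1 (Ordinal hk)) //= eqxx big1 ?addr0 //.
by move=> j hj; have -> : (nat_of_ord j == k) = false by apply/negbTE; exact: hj.
Qed.

Lemma span_sub X Y : (forall k, (k < size X)%N -> span Y X`_k) ->
  forall x, span X x -> span Y x.
Proof.
move=> h x [c ->]; apply: (big_ind (span Y)); [exact: span0 | exact: spanD |].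
by move=> k _; apply: spanZ; apply: h.
Qed.

Lemma span_mem X y : y \in X -> span X y.
Proof. by move=> hy; rewrite -(nth_index 0 hy); apply: span_nth; rewrite index_mem. Qed.

Lemma span_subm X Y : (forall y, y \in X -> span Y y) ->
  forall x, span X x -> span Y x.
Proof. by move=> h; apply: span_sub => k hk; apply: h; apply: mem_nth. Qed.

Lemma span_nil (x : Gam) : span [::] x -> x = 0.
Proof. by move=> [c ->]; rewrite big_ord0. Qed.

Lemma span_cons a X (x : Gam) : span (a :: X) x <-> exists e y, span X y /\ x = a *~ e + y.
Proof.
split.
  move=> [c ->]; rewrite big_ord_recl /=; exists (c 0%N).
  exists (\sum_(i < size X) X`_i *~ c (bump 0 i)); split => //.
  by exists (fun k => c k.+1).
move=> [e [y [hy ->]]]; apply: spanD.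
  by apply: spanZ; apply: span_mem; rewrite inE eqxx.
by apply: (span_sub (X:=X)) => // k hk; apply: span_mem; rewrite inE (mem_nth 0 hk) orbT.
Qed.

Lemma span1 (a x : Gam) : span [:: a] x <-> exists t, x = a *~ t.
Proof.
rewrite span_cons; split.
  by move=> [e [y [/span_nil -> ->]]]; exists e; rewrite addr0.
by move=> [t ->]; exists t, 0; split; [apply: span0 | rewrite addr0].
Qed.

End Span.
Lemma choice_nat (T : Type) (t0 : T) (P : nat -> T -> Prop) m :
  (forall k, (k < m)%N -> exists x, P k x) ->
  exists f : nat -> T, forall k, (k < m)%N -> P k (f k).
Proof.
move=> H.
have H' : forall k, exists x, (k < m)%N -> P k x.
  move=> k; case: (ltnP k m) => h.
    by case: (H k h) => x hx; exists x.
  by exists t0.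
exists (fun k => proj1_sig (constructive_indefinite_description _ (H' k))).
by move=> k hk; apply: (proj2_sig (constructive_indefinite_description _ (H' k))).
Qed.

Lemma indep_bound (Gam : zmodType) (X l : seq Gam) :
  (forall k, (k < size l)%N -> span X l`_k) -> indep_mod [::] l ->
  (size l <= size X)%N.
Proof.
move=> hl hind; rewrite leqNgt; apply/negP => hlt.
set m := size l in hl hind hlt *; set k := size X in hlt *.
have [M hM] : exists M : nat -> nat -> int, forall j, (j < m)%N ->
    l`_j = \sum_(p < k) X`_p *~ M j p.
  by apply: (@choice_nat (nat -> int) (fun _ => 0) (fun j c => l`_j = \sum_(p < k) X`_p *~ c p) m) => j hj; case: (hl j hj) => c hc; exists c.
pose Mq : 'M[rat]_(m, k) := \matrix_(j, p) (M j p)%:~R.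
pose W := kermx Mq.
have hW : W != 0.
  rewrite -mxrank_eq0 mxrank_ker subn_eq0 -ltnNge.
  exact: leq_ltn_trans (rank_leq_col Mq) hlt.
have [i0 [j0 hij]] : exists i0 j0, W i0 j0 != 0.
  case/boolP: [exists i : 'I_m, exists j : 'I_m, W i j != 0].
    by case/existsP => i /existsP [j hj]; exists i, j.
  move=> hn; case/negP: hW; apply/eqP/matrixP => i j; rewrite [in RHS]mxE.
  apply/eqP; apply/negPn; apply/negP => h; case/negP: hn.
  by apply/existsP; exists i; apply/existsP; exists j.
pose den : int := \prod_(j < m) denq (W i0 j).
pose c (n : nat) : int := numq (W i0 (insubd j0 n)) *
   \prod_(j' < m | j' != insubd j0 n) denq (W i0 j').
have hc : forall j : 'I_m, (c j)%:~R = W i0 j * den%:~R :> rat.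
  move=> j; rewrite /c valKd /den [in RHS](bigD1 j) //= !rmorphM /=.
  rewrite -{2}(divq_num_den (W i0 j)) mulrA divfK //.
  by rewrite intr_eq0 denq_neq0.
have hsum : forall p : 'I_k, \sum_(j < m) M j p * c j = 0.
  move=> p; apply: (@intr_inj rat); rewrite rmorph_sum rmorph0 /=.
  have := mulmx_ker Mq; rewrite -/W => /matrixP /(_ i0 p); rewrite !mxE => h.
  transitivity (den%:~R * \sum_(j < m) W i0 j * Mq j p).
    rewrite mulr_sumr; apply: eq_bigr => j _.
    by rewrite intrM hc [Mq _ _]mxE; ring.
  by rewrite h mulr0.
have h0 : \sum_(j < size l) l`_j *~ c j = 0.
  transitivity (\sum_(j < m) \sum_(p < k) X`_p *~ (M j p * c j)).
    apply: eq_bigr => j _; rewrite hM // mulrz_suml.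
    by apply: eq_bigr => p _; rewrite mulrzA.
  rewrite exchange_big big1 // => p _.
  by rewrite -mulrz_sumr hsum mulr0z.
have := hind c; rewrite h0 => /(_ (span0 _) j0 (ltn_ord j0)) /eqP.
rewrite -(@intr_eq0 rat) hc mulf_eq0 (negbTE hij) /=.
rewrite intr_eq0 /den; apply/negP; apply/prodf_neq0 => j _.
exact: denq_neq0.
Qed.

Lemma indep_nil (Gam : zmodType) (B l : seq Gam) : indep_mod B l -> indep_mod [::] l.
Proof. by move=> h c /span_nil e; apply: h; rewrite e; apply: span0. Qed.

Lemma max_ex (P : nat -> Prop) N : P 0%N -> (forall r, P r -> (r <= N)%N) ->
  exists r, P r /\ forall r', P r' -> (r' <= r)%N.
Proof.
move=> P0; elim: N => [|N IH] hb.
  by exists 0%N; split => // r' /hb.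
case: (classic (P N.+1)) => hP.
  by exists N.+1; split.
apply: IH => r hr; have := hb r hr; rewrite leq_eqVlt => /orP [/eqP e|//].
by rewrite e in hr.
Qed.

Lemma rank_ex (Gam : zmodType) (B S : seq Gam) : exists r, rank_is B S r.
Proof.
pose P := fun r => exists l : seq Gam, size l = r /\
   (forall k, (k < size l)%N -> span S l`_k) /\ indep_mod B l.
have P0 : P 0%N by exists [::]; split => //; split => // c _ k.
have Pb : forall r, P r -> (r <= size S)%N.
  move=> r [l [<- [hl hi]]]; exact: indep_bound hl (indep_nil hi).
have [r [hr hmax]] := max_ex P0 Pb.
exists r; split => // l hl hi; apply: hmax; by exists l.
Qed.

Lemma rank_spec (Gam : zmodType) (B S : seq Gam) : rank_is B S (rank_mod B S).
Proof. exact: (epsilon_spec (inhabits 0%N) (rank_is B S) (rank_ex B S)). Qed.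

Lemma loop_of (Gam : zmodType) (a : Gam) (z : int) : a *~ z = 0 -> z != 0 -> is_loop a.
Proof.
case: z => n.
  move=> h hn; exists n; split; first by rewrite lt0n; move: hn; apply: contra => /eqP ->.
  by rewrite pmulrn.
rewrite NegzE mulrNz -pmulrn => /eqP; rewrite oppr_eq0 => /eqP h _.
by exists n.+1.
Qed.

Lemma L1 (Gam : zmodType) (a : Gam) (S l : seq Gam) :
  (forall k, (k < size l)%N -> span (a :: S) l`_k) -> indep_mod [:: a] l ->
  (size l <= rank_mod [:: a] S)%N.
Proof.
move=> hl hi.
have [e he] : exists e : nat -> int, forall k, (k < size l)%N -> span S (l`_k - a *~ e k).
  apply: (@choice_nat int 0 (fun k e => span S (l`_k - a *~ e)) (size l)) => k hk.
  have [e [y [hy ->]]] := (span_cons a S (l`_k)).1 (hl k hk).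
  by exists e; rewrite addrC addKr.
pose l2 := [seq l`_k - a *~ e k | k <- iota 0 (size l)].
have hs : size l2 = size l by rewrite size_map size_iota.
have hn : forall k, (k < size l)%N -> l2`_k = l`_k - a *~ e k.
  by move=> k hk; rewrite (nth_map 0%N) ?size_iota // nth_iota.
have [_ hmax] := rank_spec [:: a] S.
rewrite -hs; apply: hmax.
  by move=> k; rewrite hs => hk; rewrite hn //; apply: he.
move=> c /span1 [t ht] k; rewrite hs => hk; apply: (hi c _ k hk).
apply/span1; exists (t + \sum_(j < size l) e j * c j).
transitivity (\sum_(j < size l2) l2`_j *~ c j + a *~ (\sum_(j < size l) e j * c j)).
  rewrite hs mulrz_sumr -big_split /=; apply: eq_bigr => j _.
  by rewrite hn // mulrzBl mulrzA subrK.
by rewrite ht mulrzDr.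
Qed.

Lemma rank_loop (Gam : zmodType) (a : Gam) (S S' : seq Gam) :
  is_loop a -> (forall x, span S' x <-> span (a :: S) x) ->
  rank_mod [::] S' = rank_mod [:: a] S.
Proof.
move=> [d [d0 hd]] hS.
have [[l [hsz [hl hi]]] hmax] := rank_spec [:: a] S.
have [[l' [hsz' [hl' hi']]] hmax'] := rank_spec [::] S'.
apply/eqP; rewrite eqn_leq; apply/andP; split.
  rewrite -hsz'.
  pose l2 := [seq x *~ d%:Z | x <- l'].
  have hs : size l2 = size l' by rewrite size_map.
  have hn : forall k, (k < size l')%N -> l2`_k = l'`_k *~ d%:Z.
    by move=> k hk; rewrite (nth_map 0).
  rewrite -hs; apply: L1.
    by move=> k; rewrite hs => hk; rewrite hn //; apply: spanZ; apply/hS; apply: hl'.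
  move=> c /span1 [t ht] k; rewrite hs => hk.
  have hd0 : (d%:Z == 0) = false by apply/negbTE; rewrite eqz_nat -lt0n.
  have H := hi' (fun k => d%:Z * c k * d%:Z).
  suff /H /(_ k hk) /eqP : span [::] (\sum_(k < size l') l'`_k *~ (d%:Z * c k * d%:Z)).
    by rewrite !mulf_eq0 hd0 /= orbF => /eqP.
  have -> : \sum_(k < size l') l'`_k *~ (d%:Z * c k * d%:Z) =
            (\sum_(k < size l2) l2`_k *~ c k) *~ d%:Z.
    rewrite hs mulrz_suml; apply: eq_bigr => j _.
    by rewrite hn // -!mulrzA mulrA.
  rewrite ht mulrzAC -pmulrn hd mul0rz; apply: span0.
rewrite -hsz; apply: hmax'.
  move=> k hk; apply/hS; apply/span_cons; exists 0, l`_k; split; first exact: hl.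
  by rewrite mulr0z add0r.
exact: indep_nil hi.
Qed.

Lemma rank_nonloop (Gam : zmodType) (a : Gam) (S S' : seq Gam) :
  ~ is_loop a -> (forall x, span S' x <-> span (a :: S) x) ->
  rank_mod [::] S' = (rank_mod [:: a] S).+1.
Proof.
move=> hnl hS.
have [[l [hsz [hl hi]]] hmax] := rank_spec [:: a] S.
have [[l' [hsz' [hl' hi']]] hmax'] := rank_spec [::] S'.
apply/eqP; rewrite eqn_leq; apply/andP; split; last first.
  rewrite -hsz -/(size (a :: l)); apply: hmax'.
    case=> [|k] hk; apply/hS; first by apply: span_mem; rewrite inE eqxx.
    apply/span_cons; exists 0, l`_k; split; first exact: hl.
    by rewrite mulr0z add0r.
  move=> c /span_nil; rewrite big_ord_recl /= => hsum.
  have hc : forall k, (k < size l)%N -> c k.+1 = 0.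
    move=> k hk; apply: (hi (fun k => c k.+1) _ k hk).
    apply/span1; exists (- c 0%N); apply/eqP; rewrite mulrNz -addr_eq0 addrC.
    by apply/eqP; exact: hsum.
  have hc0 : c 0%N = 0.
    apply/eqP; apply/negP => /negP hne; apply: hnl; apply: (loop_of _ hne).
    rewrite -[RHS]hsum big1 ?addr0 // => j _.
    by rewrite /bump add1n hc // mulr0z.
  by case=> [|k] hk //; apply: hc.
rewrite -hsz'.
set m := size l' in hl' hi' *.
case: (classic (exists (c : nat -> int) (t : int), \sum_(k < m) l'`_k *~ c k = a *~ t /\
                exists p, (p < m)%N /\ c p != 0)) => hcase; last first.
  apply: (@leq_trans (rank_mod [:: a] S)); last exact: leqnSn.
  apply: L1; first by move=> k hk; apply/hS; apply: hl'.
  move=> c /span1 [t ht] k hk; apply/eqP; apply/negP => /negP hne.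
  by apply: hcase; exists c, t; split => //; exists k.
case: hcase => c [t [ht [p [hp hcp]]]].
have ht0 : t != 0.
  apply/negP => /eqP t0; move: ht; rewrite t0 mulr0z => h.
  by move/eqP: hcp; apply; apply: (hi' c _ p hp); rewrite h; apply: span0.
pose l2 := [seq l'`_(bump p j) | j <- iota 0 m.-1].
have hs : size l2 = m.-1 by rewrite size_map size_iota.
have hbm : forall j, (j < m.-1)%N -> (bump p j < m)%N.
  move=> j hj; rewrite /bump; case: (p <= j)%N; lia.
have hn : forall j, (j < m.-1)%N -> l2`_j = l'`_(bump p j).
  by move=> j hj; rewrite (nth_map 0%N) ?size_iota // nth_iota.
rewrite -(ltn_predK hp) ltnS -hs; apply: L1.
  by move=> j; rewrite hs => hj; rewrite hn //; apply/hS; apply: hl'; apply: hbm.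
move=> c' /span1 [t' ht'] j; rewrite hs => hj.
pose c'' k := if k == p then 0 else c' (unbump p k).
pose P := Ordinal hp.
have e1 : \sum_(k < m) l'`_k *~ c'' k = a *~ t'.
  rewrite (bigD1_ord P) //= /c'' eqxx mulr0z add0r -ht' hs.
  apply: eq_bigr => i _; rewrite /= eq_sym (negbTE (neq_bump p i)) bumpK hn //.
have hd : forall k, (k < m)%N -> c'' k * t - t' * c k = 0.
  move=> k hk; apply: (hi' (fun k => c'' k * t - t' * c k) _ k hk).
  have -> : \sum_(k < m) l'`_k *~ (c'' k * t - t' * c k) = 0.
    transitivity ((\sum_(k < m) l'`_k *~ c'' k) *~ t - (\sum_(k < m) l'`_k *~ c k) *~ t').
      rewrite !mulrz_suml -sumrB; apply: eq_bigr => k' _.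
      by rewrite mulrzBr !mulrzA [l'`_k' *~ t' *~ _]mulrzAC.
    by rewrite e1 ht -!mulrzA mulrC subrr.
  exact: span0.
have t'0 : t' = 0.
  have := hd p hp; rewrite /c'' eqxx mul0r sub0r => /eqP.
  by rewrite oppr_eq0 mulf_eq0 (negbTE hcp) orbF => /eqP.
have := hd (bump p j) (hbm j hj).
rewrite /c'' eq_sym (negbTE (neq_bump p j)) bumpK t'0 mul0r subr0 => /eqP.
by rewrite mulf_eq0 (negbTE ht0) orbF => /eqP.
Qed.

Lemma mult_ext (Gam G : zmodType) (X Y : seq Gam) :
  (forall x, span X x <-> span Y x) -> mult G X = mult G Y.
Proof.
move=> hXY.
have ht : forall x, tor_mod X x <-> tor_mod Y x.
  by move=> x; split => -[d [d0 h]]; exists d; split => //; apply/hXY.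
have E : @tor_hom Gam G X = @tor_hom Gam G Y.
  apply: functional_extensionality => f; apply: propositional_extensionality.
  split => -[h1 h2 h3]; split.
  - by move=> x y /ht hx /ht hy; apply: h1.
  - by move=> x /hXY; apply: h2.
  - by move=> x hx; apply: h3 => /ht.
  - by move=> x y /ht hx /ht hy; apply: h1.
  - by move=> x /hXY; apply: h2.
  - by move=> x hx; apply: h3 => /ht.
by rewrite /mult E.
Qed.

Lemma span_setU1 (Gam : zmodType) n (A : 'I_n -> Gam) (i : 'I_n) (T : {set 'I_n}) :
  forall x, span [seq A j | j in i |: T] x <-> span (A i :: [seq A j | j in T]) x.
Proof.
move=> x; split; apply: span_subm => y.
  case/imageP => j; rewrite in_setU1 => /orP [/eqP -> -> | hj ->].
    by apply: span_mem; rewrite inE eqxx.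
  by apply: span_mem; rewrite inE (image_f A hj) orbT.
rewrite inE => /orP [/eqP -> | /imageP [j hj ->]]; apply: span_mem; apply: image_f.
  by rewrite in_setU1 eqxx.
by rewrite in_setU1 hj orbT.
Qed.

Lemma split_sum (R : comUnitRingType) n (i : 'I_n) (F : {set 'I_n} -> R) :
  \sum_(S : {set 'I_n} | S \subset [set: 'I_n]) F S =
  \sum_(S : {set 'I_n} | S \subset [set: 'I_n] :\ i) F S +
  \sum_(T : {set 'I_n} | T \subset [set: 'I_n] :\ i) F (i |: T).
Proof.
rewrite (bigID (fun S : {set 'I_n} => i \in S)) /= addrC; congr (_ + _).
  by apply: eq_bigl => S; rewrite subsetD1 subsetT.
rewrite (reindex_onto (fun T => i |: T) (fun S => S :\ i)) /=.
  apply: eq_bigl => T; rewrite subsetT setU11 /= subsetD1 subsetT /=.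
  apply/idP/idP.
    by move/eqP => <-; rewrite setD11.
  by move=> hT; rewrite setU1K.
by move=> S /andP [_ hS]; rewrite setD1K.
Qed.

Theorem mainTheorem4 (Gam G : zmodType) (hGam : fin_gen Gam)
  (hG : torsionwise_finite G) (n : nat) (A : 'I_n -> Gam) (i : 'I_n)
  (R : comUnitRingType) (q : R) (hq : q \is a GRing.unit) (v : 'I_n -> R) :
  (is_loop (A i) ->
     Ztutte G [::] [set: 'I_n] A q v =
       Ztutte G [::] ([set: 'I_n] :\ i) A q v
       + v i * Ztutte G [:: A i] ([set: 'I_n] :\ i) A q v) /\
  (~ is_loop (A i) ->
     Ztutte G [::] [set: 'I_n] A q v =
       Ztutte G [::] ([set: 'I_n] :\ i) A q v
       + v i * q^-1 * Ztutte G [:: A i] ([set: 'I_n] :\ i) A q v).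
Proof.
split => hl; rewrite /Ztutte (split_sum i); congr (_ + _); rewrite mulr_sumr;
  apply: eq_bigr => T; rewrite subsetD1 subsetT /= => hT;
  rewrite big_setU1 //= (mult_ext G (span_setU1 A i T)).
  by rewrite (rank_loop hl (span_setU1 A i T)) mulrCA.
rewrite (rank_nonloop hl (span_setU1 A i T)) exprS.
set M := (_ %:R); set u := q^-1; set Q := u ^+ _; set P := \prod_(j in T) v j.
set w := v i; clearbody M u Q P w; ring.
Qed.
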